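(* Let $\underline A=(A_1,\dots,A_m)\in{\rm Mat}(d,\mathbb{R})^m$ and $1\le k\le d$, and assume (1) $\mathrm{rank}(A_j)=k$ for all $j$, and (2) $\mathrm{rank}(A_aA_b)=k$ for every $a,b\in\{1,\dots,m\}$. For $1\le l\le m$ let $R_l:=\mathrm{Range}(A_l)$. Then for every $n\in\mathbb N$ and $i_1,\dots,i_n\in\{1,\dots,m\}$, the restriction $A_lA_{i_1}\cdots A_{i_n}|_{R_l}:R_l\to R_l$ is a linear isomorphism. Let $\mathcal G_l\subseteq\mathrm{GL}(R_l)$ be the group generated by all these automorphisms of $R_l$. Then: (a) for all $1\le i,j\le m$ the groups $\mathcal G_i$ and $\mathcal G_j$ are conjugate; (b) if some $\mathcal G_l$ is Zariski dense in $\mathrm{GL}(R_l)$, then $\wedge_i\underline A$ is irreducible for all $1\le i\le k$.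
   Context: $\wedge_iA$ denotes the $i$-th exterior power of a matrix $A$ (the matrix of its $i\times i$ minors) and $\wedge_i\underline A=(\wedge_iA_1,\dots,\wedge_iA_m)$. A tuple $(D_1,\dots,D_m)$ of $N\times N$ real matrices is called reducible if there exist subspaces $V_1,\dots,V_m$ with $\{0\}\ne V_j\subsetneq\mathrm{Range}(D_j)$ and $D_aV_b=V_a$ for all $a,b\in\{1,\dots,m\}$; otherwise it is irreducible. *)

(* Defs.v *)
From HB Require Import structures.
From mathcomp Require Import all_boot all_order all_algebra.
From mathcomp Require Import reals.
From mathcomp Require Import mpoly.

Set Implicit Arguments.
Unset Strict Implicit.
Unset Printing Implicit Defensive.

Import Order.TTheory GRing.Theory Num.Theory.
Local Open Scope ring_scope.

(* Vectors of R^N are column vectors and a matrix D acts by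
   v |-> D *m v.  MathComp's mxalgebra represents subspaces as row spaces,
   so a subspace V of R^N (column vectors) is encoded by a matrix whose rows
   are the transposes of vectors spanning V.  Hence:
     Range(D)  is encoded by  D^T          (its column space),
     D V       is encoded by  V *m D^T.                                     *)

Section Defs.
Variable R : realType.

Definition Range (N : nat) (D : 'M[R]_N) : 'M[R]_N := D^T.

Definition img (N p : nat) (D : 'M[R]_N) (V : 'M[R]_(p, N)) : 'M[R]_(p, N) :=
  V *m D^T.

Definition reducible (m N : nat) (D : 'I_m -> 'M[R]_N) : Prop :=
  exists V : 'I_m -> 'M[R]_N,
    (forall j, V j != 0 /\ (V j < Range (D j))%MS) /\
    (forall a b, (img (D a) (V b) == V a)%MS).

Definition irreducible (m N : nat) (D : 'I_m -> 'M[R]_N) : Prop :=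
  ~ reducible D.

Definition subsets (d i : nat) := {S : {set 'I_d} | #|S| == i}.

(* the a-th element (in increasing order) of an i-subset *)
Definition sidx (d i : nat) (S : subsets d i) (a : 'I_i) : 'I_d :=
  enum_val (cast_ord (esym (eqP (valP S))) a).

(* i-th exterior power: matrix of i x i minors, rows/cols indexed by the
   i-subsets of {1..d} (enumerated in the finType order of [subsets d i]). *)
Definition wedge (d i : nat) (A : 'M[R]_d) : 'M[R]_#|{: subsets d i}| :=
  \matrix_(p, q)
    \det (\matrix_(a < i, b < i) A (sidx (enum_val p) a) (sidx (enum_val q) b)).

Definition wordprod (m d : nat) (A : 'I_m -> 'M[R]_d) (w : seq 'I_m) : 'M[R]_d :=
  foldr (fun i M => A i *m M) 1%:M w.

(* Given B : 'M_(k,d) whose rows are (transposes of) a basis b_1..b_k of a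
   subspace W, and M with M W <= W, [restr B M] is the k x k matrix of
   M|_W in the basis b_1..b_k (column convention: M b_s = sum_r X r s b_r). *)
Definition restr (k d : nat) (B : 'M[R]_(k, d)) (M : 'M[R]_d) : 'M[R]_k :=
  (B *m M^T *m pinvmx B)^T.

Inductive gen_group (k : nat) (S : 'M[R]_k -> Prop) : 'M[R]_k -> Prop :=
| gen_one : gen_group S 1%:M
| gen_in X : S X -> gen_group S X
| gen_mul X Y : gen_group S X -> gen_group S Y -> gen_group S (X *m Y)
| gen_inv X : gen_group S X -> gen_group S (invmx X).

Definition Ggroup (m k d : nat) (A : 'I_m -> 'M[R]_d) (B : 'M[R]_(k, d))
  (l : 'I_m) : 'M[R]_k -> Prop :=
  gen_group (fun X => exists w : seq 'I_m, X = restr B (A l *m wordprod A w)).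

Definition conjugate (k : nat) (G H : 'M[R]_k -> Prop) : Prop :=
  exists P : 'M[R]_k, P \in unitmx /\
    forall X, G X <-> H (invmx P *m X *m P).

Definition zariski_dense (k : nat) (G : 'M[R]_k -> Prop) : Prop :=
  forall p : {mpoly R[k * k]},
    (forall X, G X -> p.@[fun t => mxvec X 0 t] = 0) ->
    forall X, X \in unitmx -> p.@[fun t => mxvec X 0 t] = 0.

End Defs.

(* Main.v *)
Require Import Defs.
From HB Require Import structures.
From mathcomp Require Import all_boot all_order all_algebra.
From mathcomp Require Import reals.
From mathcomp Require Import mpoly.
From mathcomp Require Import all_fingroup.
Require Import Defs.
Import Order.TTheory GRing.Theory Num.Theory.
Local Open Scope ring_scope.
Set Implicit Arguments.
Unset Strict Implicit.
Unset Printing Implicit Defensive.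

Lemma sidx_in n i (S : subsets n i) a : sidx S a \in val S.
Proof. exact: enum_valP. Qed.

Lemma sidx_inj n i (S : subsets n i) : injective (sidx S).
Proof. by move=> a b /enum_val_inj /cast_ord_inj. Qed.

Lemma sidx_surj n i (S : subsets n i) x : x \in val S -> exists a, sidx S a = x.
Proof.
move=> Hx; exists (cast_ord (eqP (valP S)) (enum_rank_in Hx x)).
by rewrite /sidx cast_ordK enum_rankK_in.
Qed.

Section CB.
Variable R : comPzRingType.

Definition colsubS n i (S : subsets n i) (P : 'M[R]_(i, n)) : 'M[R]_i :=
  \matrix_(a, b) P a (sidx S b).
Definition rowsubS n i (S : subsets n i) (Q : 'M[R]_(n, i)) : 'M[R]_i :=
  \matrix_(a, b) Q (sidx S a) b.

Lemma det_mulmx_expand n i (P : 'M[R]_(i, n)) (Q : 'M[R]_(n, i)) :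
  \det (P *m Q) = \sum_(f : {ffun 'I_i -> 'I_n})
     (\prod_a P a (f a)) * \det (\matrix_(a, b) Q (f a) b).
Proof.
rewrite /(\det (P *m Q)).
under eq_bigr => s _.
  rewrite (_ : \prod_a (P *m Q) a (s a) = \prod_a \sum_c P a c * Q c (s a));
    last by apply: eq_bigr => a _; rewrite mxE.
  rewrite bigA_distr_bigA big_distrr /=.
  over.
rewrite exchange_big /=; apply: eq_bigr => f _.
rewrite /(\det _) big_distrr /=; apply: eq_bigr => s _.
rewrite big_split /= mulrCA; congr (_ * (_ * _)).
by apply: eq_bigr => a _; rewrite mxE.
Qed.


Definition phiS n i (x : subsets n i * 'S_i) : {ffun 'I_i -> 'I_n} :=
  [ffun a => sidx x.1 (x.2 a)].

Lemma phiS_inj n i : injective (@phiS n i).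
Proof.
move=> [S s] [T t] /ffunP E.
have EST : S = T.
  apply: val_inj; apply/setP => x; apply/idP/idP => Hx.
  - have [a <-] := sidx_surj Hx.
    have := E (s^-1 a)%g; rewrite !ffunE /= permKV => ->; exact: sidx_in.
  - have [a <-] := sidx_surj Hx.
    have := E (t^-1 a)%g; rewrite !ffunE /= permKV => <-; exact: sidx_in.
subst T; congr (_, _); apply/permP => a.
by have := E a; rewrite !ffunE /= => /sidx_inj.
Qed.

Lemma phiS_im n i (f : {ffun 'I_i -> 'I_n}) :
  injectiveb f = (f \in [set phiS x | x in setT]).
Proof.
apply/idP/idP.
  move/injectiveP => If.
  have cS : #|[set f a | a in 'I_i]| == i by rewrite card_imset // card_ord.
  pose S : subsets n i := exist (fun S0 : {set 'I_n} => #|S0| == i) _ cS.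
  have : forall a, exists b, sidx S b = f a.
    move=> a; apply: sidx_surj; rewrite /S /=; exact: imset_f.
  case/fin_all_exists => t Ht.
  have It : injective t by move=> a b Eab; apply: If; rewrite -!Ht Eab.
  apply/imsetP; exists (S, perm It) => //.
  by apply/ffunP => a; rewrite !ffunE /= permE Ht.
case/imsetP => [[S s]] _ ->; apply/injectiveP => a b.
by rewrite !ffunE /= => /sidx_inj /perm_inj.
Qed.

Lemma cauchy_binet n i (P : 'M[R]_(i, n)) (Q : 'M[R]_(n, i)) :
  \det (P *m Q) = \sum_(S : subsets n i) \det (colsubS S P) * \det (rowsubS S Q).
Proof.
rewrite det_mulmx_expand (bigID (fun f : {ffun 'I_i -> 'I_n} => injectiveb f)) /=.
rewrite [X in _ + X]big1 ?addr0; last first.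
  move=> f /injectivePn [a [b Dab Efab]].
  by rewrite (determinant_alternate Dab) ?mulr0 // => j; rewrite !mxE Efab.
rewrite (eq_bigl (fun f => f \in [set phiS x | x in setT])); last first.
  by move=> f; rewrite phiS_im.
rewrite big_imset /=; last by move=> x y _ _; apply: phiS_inj.
rewrite (eq_bigl (fun x => predT x.1 && predT x.2)); last by move=> x; rewrite in_setT.
rewrite -(pair_big predT predT (fun S s => (\prod_a P a (phiS (S, s) a)) * \det (\matrix_(a, b) Q (phiS (S, s) a) b))) /=; apply: eq_bigr => S _.

rewrite /(\det (colsubS S P)) big_distrl /=; apply: eq_bigr => s _.
have -> : \matrix_(a, b) Q (phiS (S, s) a) b = row_perm s (rowsubS S Q).
  by apply/matrixP => a b; rewrite !mxE ffunE.
rewrite row_permE det_mulmx det_perm.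
have -> : \prod_a P a (phiS (S, s) a) = \prod_a colsubS S P a (s a).
  by apply: eq_bigr => a _; rewrite !mxE ffunE.
by rewrite mulrA [_ * (-1) ^+ _]mulrC.
Qed.

End CB.


Lemma subsets_diff n i (S T : subsets n i) : S != T ->
  exists2 x, x \in val S & x \notin val T.
Proof.
move=> ST; apply/subsetPn; apply: contra ST => sST.
apply/eqP/val_inj/eqP; by rewrite eqEcard (eqP (valP S)) (eqP (valP T)) leqnn andbT.
Qed.

Section W.
Variable R : comPzRingType.

Definition minorS m n i (S : subsets m i) (T : subsets n i) (M : 'M[R]_(m, n)) :=
  \det (\matrix_(a, b) M (sidx S a) (sidx T b)).

Definition mywedge i m n (M : 'M[R]_(m, n)) :
    'M[R]_(#|{: subsets m i}|, #|{: subsets n i}|) :=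
  \matrix_(p, q) \det (\matrix_(a, b) M (sidx (enum_val p) a) (sidx (enum_val q) b)).

Lemma mywedgeE i m n (M : 'M[R]_(m, n)) p q :
  mywedge i M p q = minorS (enum_val p) (enum_val q) M.
Proof. by rewrite mxE. Qed.

Lemma det_row0 n (A : 'M[R]_n) a : (forall b, A a b = 0) -> \det A = 0.
Proof.
move=> H; rewrite (expand_det_row A a) big1 // => j _; by rewrite H mul0r.
Qed.

Lemma det_col0 n (A : 'M[R]_n) b : (forall a, A a b = 0) -> \det A = 0.
Proof.
move=> H; rewrite -det_tr (det_row0 (a := b)) // => a; by rewrite mxE H.
Qed.

Lemma mywedgeM i m n p (M : 'M[R]_(m, n)) (N : 'M[R]_(n, p)) :
  mywedge i (M *m N) = mywedge i M *m mywedge i N.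
Proof.
apply/matrixP => x y; rewrite !mxE.
set P' := \matrix_(a, c) M (sidx (enum_val x) a) c.
set Q' := \matrix_(c, b) N c (sidx (enum_val y) b).
have -> : \matrix_(a, b) (M *m N) (sidx (enum_val x) a) (sidx (enum_val y) b)
   = P' *m Q'.
  by apply/matrixP => a b; rewrite !mxE; apply: eq_bigr => c _; rewrite !mxE.
rewrite cauchy_binet (reindex (@enum_rank _)) /=; last first.
  by apply: onW_bij; exact: enum_rank_bij.
apply: eq_bigr => S _; rewrite !mxE enum_rankK; congr (_ * _); congr (\det _);
  by apply/matrixP => a b; rewrite !mxE.
Qed.

Lemma mywedge_tr i m n (M : 'M[R]_(m, n)) : mywedge i M^T = (mywedge i M)^T.
Proof.
apply/matrixP => x y; rewrite !mxE -det_tr; congr (\det _).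
by apply/matrixP => a b; rewrite !mxE.
Qed.

Lemma mywedge1 i n : mywedge i (1%:M : 'M[R]_n) = 1%:M.
Proof.
apply/matrixP => x y; rewrite !mxE.
have [<-|Dxy] := eqVneq x y.
  rewrite [X in \det X](_ : _ = 1%:M) ?det1 //; apply/matrixP => a b.
  by rewrite !mxE (inj_eq (@sidx_inj _ _ _)).
have : enum_val x != enum_val y by rewrite (inj_eq enum_val_inj).
case/subsets_diff => z Hz Nz; have [a Ea] := sidx_surj Hz.
apply: (det_row0 (a := a)) => b; rewrite !mxE Ea.
case: eqP => // E; by move: Nz; rewrite E sidx_in.
Qed.

Definition Ymx n i (S T : subsets n i) : 'M[R]_n :=
  \matrix_(x, y) \sum_c ((x == sidx S c) && (y == sidx T c))%:R.

Lemma mywedgeY n i (S T : subsets n i) :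
  mywedge i (Ymx S T) = delta_mx (enum_rank S) (enum_rank T).
Proof.
apply/matrixP => x y; rewrite !mxE.
have [ES|NS] := eqVneq (enum_val x) S; last first.
  have [z Hz Nz] := subsets_diff NS; have [a Ea] := sidx_surj Hz.
  have -> : (x == enum_rank S) = false.
    by apply/negbTE; apply: contra NS => /eqP ->; rewrite enum_rankK.
  apply: (det_row0 (a := a)) => b; rewrite !mxE Ea big1 // => c _.
  case: eqP => //= E; by move: Nz; rewrite E sidx_in.
have [ET|NT] := eqVneq (enum_val y) T; last first.
  have [z Hz Nz] := subsets_diff NT; have [b Eb] := sidx_surj Hz.
  have -> : (y == enum_rank T) = false.
    by apply/negbTE; apply: contra NT => /eqP ->; rewrite enum_rankK.
  rewrite andbF; apply: (det_col0 (b := b)) => a; rewrite !mxE Eb big1 // => c _.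
  rewrite (_ : (z == sidx T c) = false) ?andbF //.
  by apply/negbTE; apply: contra Nz => /eqP ->; exact: sidx_in.
rewrite -ES -ET !enum_valK !eqxx /=.
rewrite [X in \det X](_ : _ = 1%:M) ?det1 //; apply/matrixP => a b; rewrite !mxE ES ET.
rewrite (bigD1 a) //= big1 ?addr0; last first.
  move=> c Nc; rewrite !(inj_eq (@sidx_inj _ _ _)).
  by rewrite (negbTE (_ : a != c)) // eq_sym.
by rewrite !(inj_eq (@sidx_inj _ _ _)) eqxx /= eq_sym.
Qed.

End W.

Lemma mywedge_map (R S : comPzRingType) (f : {rmorphism R -> S}) i m n
  (M : 'M[R]_(m, n)) : map_mx f (mywedge i M) = mywedge i (map_mx f M).
Proof.
apply/matrixP => x y; rewrite !mxE -det_map_mx; congr (\det _).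
by apply/matrixP => a b; rewrite !mxE.
Qed.



Lemma poly_all0 (R : numFieldType) (p : {poly R}) : (forall t, p.[t] = 0) -> p = 0.
Proof.
move=> H; apply/eqP; apply/negPn/negP => Np.
pose rs := [seq j%:R : R | j <- iota 0 (size p)].
have Hall : all (root p) rs.
  by apply/allP => x /mapP [j _ ->]; apply/rootP; exact: H.
have Hu : uniq rs.
  rewrite map_inj_uniq ?iota_uniq // => a b /eqP; by rewrite eqr_nat => /eqP.
by have := max_poly_roots Np Hall Hu; rewrite size_map size_iota ltnn.
Qed.

Lemma mpoly_units_all (R : numFieldType) (k : nat) (q : {mpoly R[k * k]}) :
  (forall X : 'M[R]_k, X \in unitmx -> q.@[fun t => mxvec X 0 t] = 0) ->
  forall X : 'M[R]_k, q.@[fun t => mxvec X 0 t] = 0.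
Proof.
move=> H X0.
pose Xt : 'M[{poly R}]_k := map_mx polyC X0 + ('X)%:M.
pose pq : {poly R} := \sum_(m <- msupp q) (q@_m)%:P * \prod_i (mxvec Xt 0 i) ^+ m i.
have Ev : forall t, map_mx (horner_eval t) Xt = X0 + t%:M.
  move=> t; apply/matrixP => a b; rewrite !mxE /= horner_evalE hornerD hornerC.
  by rewrite hornerMn hornerX.
have Epq : forall t, pq.[t] = q.@[fun i => mxvec (X0 + t%:M) 0 i].
  move=> t; rewrite mevalE -horner_evalE rmorph_sum /=; apply: eq_bigr => m _.
  rewrite rmorphM /= horner_evalE hornerC rmorph_prod /=; congr (_ * _).
  apply: eq_bigr => i _; rewrite rmorphXn /=; congr (_ ^+ _).
  by rewrite -Ev -map_mxvec mxE.
pose dX := \det Xt.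
have EdX : forall t, dX.[t] = \det (X0 + t%:M).
  by move=> t; rewrite -horner_evalE -det_map_mx Ev.
have dX0 : dX != 0.
  have -> : dX = char_poly (- X0).
    by rewrite /dX /char_poly /char_poly_mx map_mxN opprK addrC.
  exact: monic_neq0 (char_poly_monic _).
have : pq * dX = 0.
  apply: poly_all0 => t; rewrite hornerM EdX Epq.
  have [U|NU] := boolP (X0 + t%:M \in unitmx); first by rewrite H ?mul0r.
  by move: NU; rewrite unitmxE unitfE negbK => /eqP ->; rewrite mulr0.
move/eqP; rewrite mulf_eq0 (negbTE dX0) orbF => /eqP pq0.
have := Epq 0; rewrite pq0 horner0.
have -> : X0 + 0%:M = X0.
  by apply/matrixP => a b; rewrite !mxE mul0rn addr0.
by move=> <-.
Qed.


Section Smx.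
Variable R : realType.

Definition Smx k d (B1 B2 : 'M[R]_(k, d)) (M : 'M[R]_d) : 'M[R]_k :=
  (B1 *m M^T *m pinvmx B2)^T.

Lemma SmxE k d (B1 B2 : 'M[R]_(k, d)) M : (B1 *m M^T <= B2)%MS ->
  (Smx B1 B2 M)^T *m B2 = B1 *m M^T.
Proof. by move=> H; rewrite trmxK mulmxKpV. Qed.

Lemma Smx_comp k d (B1 B2 B3 : 'M[R]_(k, d)) M N :
  (B1 *m M^T <= B2)%MS -> (B2 *m N^T <= B3)%MS -> row_free B3 ->
  Smx B1 B3 (N *m M) = Smx B2 B3 N *m Smx B1 B2 M.
Proof.
move=> H1 H2 F3; apply: trmx_inj; rewrite [in RHS]trmx_mul.
apply: (row_free_inj F3).
have H12 : (B1 *m (N *m M)^T <= B3)%MS.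
  rewrite trmx_mul mulmxA; apply: submx_trans H2; exact: submxMr.
by rewrite /= SmxE // -mulmxA SmxE // mulmxA SmxE // trmx_mul mulmxA.
Qed.

Lemma Smx_unit k d (B1 B2 : 'M[R]_(k, d)) M :
  (B1 *m M^T <= B2)%MS -> row_free B2 -> \rank (B1 *m M^T) = k ->
  Smx B1 B2 M \in unitmx.
Proof.
move=> H F2 rk; rewrite -unitmx_tr -row_free_unit /row_free.
rewrite eqn_leq rank_leq_row /= -{1}rk -(SmxE H); exact: mxrankM_maxl.
Qed.

Lemma restrE k d (B : 'M[R]_(k, d)) M : restr B M = Smx B B M.
Proof. by []. Qed.

Lemma gen_group_map k (S S' : 'M[R]_k -> Prop) (phi : 'M[R]_k -> 'M[R]_k) :
  phi 1%:M = 1%:M -> (forall X Y, phi (X *m Y) = phi X *m phi Y) ->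
  (forall X, phi (invmx X) = invmx (phi X)) ->
  (forall X, S X -> gen_group S' (phi X)) ->
  forall X, gen_group S X -> gen_group S' (phi X).
Proof.
move=> h1 hM hV hS X; elim => [|Y /hS //|Y Z _ IY _ IZ|Y _ IY].
- rewrite h1; exact: gen_one.
- rewrite hM; exact: gen_mul.
- rewrite hV; exact: gen_inv.
Qed.

Lemma conj_invmx k (P X : 'M[R]_k) : P \in unitmx ->
  invmx (invmx P *m X *m P) = invmx P *m invmx X *m P.
Proof.
move=> UP; have [UX|NX] := boolP (X \in unitmx).
  have UY : invmx P *m X *m P \in unitmx by rewrite !unitmx_mul unitmx_inv UP UX.
  have ZY : invmx P *m invmx X *m P *m (invmx P *m X *m P) = 1%:M.
    rewrite -!mulmxA (mulmxA P) mulmxV // mul1mx (mulmxA (invmx X)) mulVmx //.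
    by rewrite mul1mx mulVmx.
  by rewrite -[LHS]mul1mx -ZY -mulmxA mulmxV // mulmx1.
by rewrite (invmx_out NX) invmx_out // inE !unitmx_mul (negbTE NX) andbF.
Qed.

Lemma invmx_mulU k (X Y : 'M[R]_k) : X \in unitmx -> Y \in unitmx ->
  invmx (X *m Y) = invmx Y *m invmx X.
Proof.
move=> UX UY; have UXY : X *m Y \in unitmx by rewrite unitmx_mul UX UY.
have E : invmx Y *m invmx X *m (X *m Y) = 1%:M.
  by rewrite mulmxA -(mulmxA _ (invmx X)) mulVmx // mulmx1 mulVmx.
by rewrite -[LHS]mul1mx -E -mulmxA mulmxV // mulmx1.
Qed.

Lemma conj_gen k (S S' : 'M[R]_k -> Prop) (P : 'M[R]_k) : P \in unitmx ->
  (forall X, S X -> gen_group S' (invmx P *m X *m P)) ->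
  forall X, gen_group S X -> gen_group S' (invmx P *m X *m P).
Proof.
move=> UP hS; apply: gen_group_map => //.
- by rewrite mulmx1 mulVmx.
- move=> X Y; rewrite !mulmxA mulmxK //.
- by move=> X; rewrite conj_invmx.
Qed.

End Smx.

Section Main12.
Variables (R : realType) (m d k : nat) (A : 'I_m -> 'M[R]_d).
Hypothesis hrank : forall j, \rank (A j) = k.
Hypothesis hrank2 : forall a b, \rank (A a *m A b) = k.
Variable B : 'I_m -> 'M[R]_(k, d).
Hypothesis hB : forall l, row_free (B l) /\ (B l == Range (A l))%MS.

Lemma wordprod_rcons w i : wordprod A (rcons w i) = wordprod A w *m A i.
Proof.
elim: w => [|j w IH] /=; first by rewrite mul1mx mulmx1.
by rewrite IH mulmxA.
Qed.

Lemma rank_word a w : \rank (A a *m wordprod A w) = k.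
Proof.
elim: w a => [|i w IH] a /=; first by rewrite mulmx1.
rewrite -mxrank_tr trmx_mul.
have E : ((A i *m wordprod A w)^T == (A i)^T)%MS.
  rewrite -(mxrank_leqif_eq (_ : _ <= _)%MS).
    by rewrite !mxrank_tr IH hrank.
  by rewrite trmx_mul submxMl.
by rewrite (eqmxMr _ (eqmxP E)) -trmx_mul mxrank_tr.
Qed.

Lemma B_eq l : (B l :=: (A l)^T)%MS.
Proof. by apply/eqmxP; case: (hB l). Qed.

Lemma BAW_sub a b w : (B a *m (A b *m wordprod A w)^T <= B b)%MS.
Proof.
rewrite (B_eq b) trmx_mul mulmxA; exact: submxMl.
Qed.

Lemma BAW_rank a b w : \rank (B a *m (A b *m wordprod A w)^T) = k.
Proof.
rewrite (eqmxMr _ (B_eq a)) -trmx_mul mxrank_tr -mulmxA -wordprod_rcons.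
exact: rank_word.
Qed.

Lemma BAW_unit a b w : Smx (B a) (B b) (A b *m wordprod A w) \in unitmx.
Proof.
apply: Smx_unit; [exact: BAW_sub | by case: (hB b) | exact: BAW_rank].
Qed.

Lemma part1 l w :
  (img (A l *m wordprod A w) (Range (A l)) <= Range (A l))%MS /\
  restr (B l) (A l *m wordprod A w) \in unitmx.
Proof.
split; last exact: BAW_unit.
by rewrite /img /Range trmx_mul mulmxA submxMl.
Qed.

Lemma part2 i j : conjugate (Ggroup A (B i) i) (Ggroup A (B j) j).
Proof.
have F x : row_free (B x) by case: (hB x).
have sub1 a b : (B a *m (A b)^T <= B b)%MS.
  by have := BAW_sub a b [::]; rewrite /= mulmx1.
pose U := Smx (B j) (B i) (A i).
pose V := Smx (B i) (B j) (A j).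
have hU : V *m U = restr (B j) (A j *m wordprod A [:: i]).
  by rewrite /= mulmx1 restrE (Smx_comp (sub1 j i) (sub1 i j)).
have hV : U *m V = restr (B i) (A i *m wordprod A [:: j]).
  by rewrite /= mulmx1 restrE (Smx_comp (sub1 i j) (sub1 j i)).
have UVU : V *m U \in unitmx by rewrite hU BAW_unit.
have UUV : U *m V \in unitmx by rewrite hV BAW_unit.
have UU : U \in unitmx by move: UVU; rewrite unitmx_mul => /andP[].
have UV : V \in unitmx by move: UUV; rewrite unitmx_mul => /andP[].
have fw w : restr (B j) (A j *m wordprod A (i :: rcons w i)) =
    V *m restr (B i) (A i *m wordprod A w) *m U.
  rewrite /= wordprod_rcons !restrE.
  have -> : A j *m (A i *m (wordprod A w *m A i)) =
      (A j *m (A i *m wordprod A w)) *m A i by rewrite !mulmxA.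
  have H2 : (B i *m (A j *m (A i *m wordprod A w))^T <= B j)%MS.
    exact: (BAW_sub i j (i :: w)).
  by rewrite (Smx_comp (sub1 j i) H2 (F j)) (Smx_comp (BAW_sub i i w) (sub1 i j) (F j)).
have bw w : restr (B i) (A i *m wordprod A (j :: rcons w j)) =
    U *m restr (B j) (A j *m wordprod A w) *m V.
  rewrite /= wordprod_rcons !restrE.
  have -> : A i *m (A j *m (wordprod A w *m A j)) =
      (A i *m (A j *m wordprod A w)) *m A j by rewrite !mulmxA.
  have H2 : (B j *m (A i *m (A j *m wordprod A w))^T <= B i)%MS.
    exact: (BAW_sub j i (j :: w)).
  by rewrite (Smx_comp (sub1 i j) H2 (F i)) (Smx_comp (BAW_sub j j w) (sub1 j i) (F i)).
exists U; split => // X; split.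
  apply: conj_gen => // Y [w ->].
  have -> : invmx U *m restr (B i) (A i *m wordprod A w) *m U =
      invmx (V *m U) *m (V *m restr (B i) (A i *m wordprod A w) *m U).
    by rewrite invmx_mulU // -!mulmxA (mulmxA (invmx V)) mulVmx // mul1mx.
  rewrite hU -fw; apply: gen_mul; apply: gen_inv || apply: gen_in.
    by apply: gen_in; eexists.
  by eexists.
move=> HG.
have UU' : invmx U \in unitmx by rewrite unitmx_inv.
suff H' : Ggroup A (B i) i (invmx (invmx U) *m (invmx U *m X *m U) *m invmx U).
  by move: H'; rewrite invmxK !mulmxA mulmxV // mul1mx mulmxK.
apply: (conj_gen UU') HG => Y [w ->]; rewrite invmxK.
have -> : U *m restr (B j) (A j *m wordprod A w) *m invmx U =
    (U *m restr (B j) (A j *m wordprod A w) *m V) *m invmx (U *m V).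
  by rewrite invmx_mulU // !mulmxA mulmxK.
rewrite hV -bw; apply: gen_mul; first by apply: gen_in; eexists.
by apply: gen_inv; apply: gen_in; eexists.
Qed.

End Main12.


Section Main3.
Variables (R : realType) (m d k : nat) (A : 'I_m -> 'M[R]_d).
Hypothesis hrank : forall j, \rank (A j) = k.
Hypothesis hrank2 : forall a b, \rank (A a *m A b) = k.
Variable B : 'I_m -> 'M[R]_(k, d).
Hypothesis hB : forall l, row_free (B l) /\ (B l == Range (A l))%MS.

Lemma part3 : (exists l : 'I_m, zariski_dense (Ggroup A (B l) l)) ->
     forall i : nat, (1 <= i <= k)%N ->
       irreducible (fun j : 'I_m => wedge i (A j)).
Proof.
move=> [l Hz] i _ [V [hV1 hV2]].
have wE j : wedge i (A j) = mywedge i (A j) by [].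
pose Bl := B l.
have Fl : row_free Bl by case: (hB l).
have [Bp BBp] : exists Bp : 'M[R]_(d, k), Bl *m Bp = 1%:M.
  exists (pinvmx Bl).
  apply: (row_free_inj Fl); rewrite /= mul1mx mulmxKpV //; exact: submx_refl.
have AsB : ((A l)^T <= Bl)%MS by rewrite /Bl (B_eq hB l) submx_refl.
have AP : (A l)^T *m (Bp *m Bl) = (A l)^T.
  have [Z ->] := submxP AsB.
  by rewrite -mulmxA (mulmxA Bl) BBp mul1mx.
have chain w b : exists c, (V b *m (mywedge i (wordprod A w))^T == V c)%MS.
  elim: w b => [|a w IH] b /=.
    by exists b; rewrite mywedge1 trmx1 mulmx1 /eqmx submx_refl.
  have [c Hc] := IH b; exists a.
  rewrite mywedgeM trmx_mul mulmxA; apply/eqmxP.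
  apply: eqmx_trans (eqmxMr _ (eqmxP Hc)) _; apply/eqmxP.
  by have := hV2 a c; rewrite /img wE.
have gen w : (V l *m (mywedge i (A l *m wordprod A w))^T == V l)%MS.
  have [c Hc] := chain w l.
  rewrite mywedgeM trmx_mul mulmxA; apply/eqmxP.
  apply: eqmx_trans (eqmxMr _ (eqmxP Hc)) _; apply/eqmxP.
  by have := hV2 l c; rewrite /img wE.
have VlA : (V l <= mywedge i (A l)^T)%MS.
  by have := ltmxW (proj2 (hV1 l)); rewrite /Range wE mywedge_tr.
have VlP : V l *m mywedge i (Bp *m Bl) = V l.
  by have [Z ->] := submxP VlA; rewrite -mulmxA -mywedgeM AP.
pose L (X : 'M[R]_k) := Bp *m X^T *m Bl.
have LM X Y : L (X *m Y) = L Y *m L X.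
  by rewrite /L trmx_mul !mulmxA -(mulmxA _ Bl Bp) BBp mulmx1.
have GInv X : Ggroup A (B l) l X -> (V l *m mywedge i (L X) <= V l)%MS.
  elim => {X} [|X [w ->]|X Y _ IX _ IY|X _ IX].
  - by rewrite /L trmx1 mulmx1 VlP submx_refl.
  - rewrite /L restrE /Smx trmxK -(mulmxA Bp) (mulmxKpV (BAW_sub hB l l w)).
    rewrite mulmxA mywedgeM mulmxA VlP mywedge_tr.
    by have := gen w; case/andP.
  - rewrite LM mywedgeM mulmxA; apply: submx_trans IX; exact: submxMr.
  - have [UX|NX] := boolP (X \in unitmx); last by rewrite invmx_out.
    set T := mywedge i (L X) in IX *; set T' := mywedge i (L (invmx X)).
    have TT : T *m T' = mywedge i (Bp *m Bl).
      by rewrite -mywedgeM -LM mulVmx // /L trmx1 mulmx1.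
    have ET : (V l *m T == V l)%MS.
      rewrite -(mxrank_leqif_eq IX) eqn_leq mxrankS //=.
      by rewrite -{1}VlP -TT mulmxA mxrankM_maxl.
    by rewrite -(eqmxMr T' (eqmxP ET)) -mulmxA TT VlP submx_refl.
pose Cm n1 n2 (M : 'M[R]_(n1, n2)) := map_mx (@mpolyC (k * k) R) M.
pose Xp : 'M[{mpoly R[k * k]}]_k := \matrix_(a, b) 'X_(mxvec_index a b).
pose Qp := Cm _ _ (V l) *m mywedge i (Cm _ _ Bp *m Xp^T *m Cm _ _ Bl)
   *m Cm _ _ (cokermx (V l)).
have EC v n1 n2 (M : 'M[R]_(n1, n2)) : map_mx (meval v) (Cm _ _ M) = M.
  by apply/matrixP => a b; rewrite !mxE mevalC.
have EQ X : map_mx (meval (fun t => mxvec X 0 t)) Qp =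
    V l *m mywedge i (L X) *m cokermx (V l).
  rewrite /Qp !map_mxM mywedge_map !map_mxM -map_trmx !EC /L.
  do 2!congr (_ *m _); congr (mywedge i (_ *m _ *m _)); congr (_^T).
  by apply/matrixP => a b; rewrite !mxE /= mevalXU mxvecE.
have InvAll X : (V l *m mywedge i (L X) <= V l)%MS.
  rewrite submxE; apply/eqP/matrixP => r c; rewrite -EQ mxE [RHS]mxE.
  apply: (mpoly_units_all (q := Qp r c)) => Y UY; apply: Hz => // Z HZ.
  have := GInv Z HZ; rewrite submxE => /eqP E0.
  by move: (EQ Z) => /matrixP /(_ r c); rewrite mxE /= => ->; rewrite E0 mxE.
pose V' := V l *m mywedge i Bp.
have VE : V l = V' *m mywedge i Bl by rewrite /V' -mulmxA -mywedgeM VlP.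
have BpB : mywedge i Bl *m mywedge i Bp = 1%:M by rewrite -mywedgeM BBp mywedge1.
have V'inv Y : (V' *m mywedge i Y <= V')%MS.
  have := InvAll Y^T; rewrite /L trmxK !mywedgeM !mulmxA => H.
  have := submxMr (mywedge i Bp) H.
  by rewrite -!mulmxA BpB mulmx1 mulmxA.
have [[r c] /= Hrc | H0] := pickP (fun rc : 'I_#|{: subsets d i}| * 'I_#|{: subsets k i}| =>
    V' rc.1 rc.2 != 0); last first.
  have V'0 : V' = 0.
    by apply/matrixP => r c; have := H0 (r, c); rewrite /= => /negbFE/eqP ->; rewrite mxE.
  by move: (proj1 (hV1 l)); rewrite VE V'0 mul0mx eqxx.
have full (c' : 'I_#|{: subsets k i}|) : (delta_mx (0 : 'I_1) c' <= V')%MS.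
  have := V'inv (Ymx R (enum_val c) (enum_val c')); rewrite mywedgeY !enum_valK.
  have Erow : row r (V' *m delta_mx c c') = V' r c *: delta_mx 0 c'.
    apply/matrixP => a b; rewrite !mxE (bigD1 c) //= big1 ?addr0.
      by rewrite !mxE eqxx /= (ord1 a) eqxx.
    by move=> x Nx; rewrite !mxE (negbTE Nx) mulr0.
  move=> H; have := submx_trans (row_sub r _) H; rewrite Erow.
  move=> H2; rewrite -(scalerK Hrc (delta_mx 0 c')); apply: scalemx_sub; exact: H2.
have oneV' : (1%:M <= V')%MS by apply/row_subP => c'; rewrite row1; exact: full.
have : (mywedge i (A l)^T <= V l)%MS.
  rewrite -{1}AP mywedgeM mywedgeM mulmxA; apply: submx_trans (submxMl _ _) _.
  by rewrite VE -{1}(mul1mx (mywedge i Bl)); exact: submxMr.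
by move: (proj2 (hV1 l)); rewrite ltmxE /Range wE mywedge_tr => /andP[_ /negP].
Qed.

End Main3.


Unset Implicit Arguments.

Theorem proposition2p10 (R : realType) (m d k : nat) (A : 'I_m -> 'M[R]_d)
  (hk : (1 <= k <= d)%N)
  (hrank : forall j, \rank (A j) = k)
  (hrank2 : forall a b, \rank (A a *m A b) = k)
  (B : 'I_m -> 'M[R]_(k, d))
  (hB : forall l, row_free (B l) /\ (B l == Range (A l))%MS) :
  (forall (l : 'I_m) (w : seq 'I_m),
      (img (A l *m wordprod A w) (Range (A l)) <= Range (A l))%MS /\
      restr (B l) (A l *m wordprod A w) \in unitmx) /\
  (forall i j : 'I_m, conjugate (Ggroup A (B i) i) (Ggroup A (B j) j)) /\
  ((exists l : 'I_m, zariski_dense (Ggroup A (B l) l)) ->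
     forall i : nat, (1 <= i <= k)%N ->
       irreducible (fun j : 'I_m => wedge i (A j))).
Proof.
split; first by move=> l w; exact: (part1 hrank hrank2 hB).
split; first by move=> i j; exact: (part2 hrank hrank2 hB).
exact: (part3 hB).
Qed.
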